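(* There is an absolute constant $C>0$ such that for every nonconstant harmonic function $u:\mathbb{C}\to\mathbb{R}$ there exists a sequence of discs $D(z_n,\rho_n)$ ($z_n\in\mathbb{C}$, $\rho_n>0$) with, for all $n$, $u(z_n)=0$ and $M(u,z_n,\rho_n)\le C\,M(u,z_n,\rho_n/2)$, and moreover $\lim_{n\to\infty}M(u,z_n,\rho_n)=+\infty$.
   Context: For a real function $u$, $M(u,z,r)=\sup_{D(z,r)}u$ denotes the supremum of $u$ over the disc $D(z,r)$ of center $z$ and radius $r$. *)

(* Defs.v *)
From Stdlib Require Import Reals.
From Coquelicot Require Import Coquelicot.
Open Scope R_scope.

Definition curry2 (u : C -> R) : R -> R -> R := fun x y => u (x, y).

Definition dx (u : C -> R) : C -> R := fun z => Derive (fun t => u (t, snd z)) (fst z).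
Definition dy (u : C -> R) : C -> R := fun z => Derive (fun t => u (fst z, t)) (snd z).

Definition C2 (u : C -> R) : Prop :=
  (forall z, ex_derive (fun t => u (t, snd z)) (fst z)) /\
  (forall z, ex_derive (fun t => u (fst z, t)) (snd z)) /\
  (forall v, (v = dx u \/ v = dy u) ->
     (forall z, ex_derive (fun t => v (t, snd z)) (fst z)) /\
     (forall z, ex_derive (fun t => v (fst z, t)) (snd z))) /\
  (forall v, (v = u \/ v = dx u \/ v = dy u \/ v = dx (dx u) \/ v = dy (dx u)
              \/ v = dx (dy u) \/ v = dy (dy u)) ->
     forall x y, continuity_2d_pt (curry2 v) x y).

Definition harmonic (u : C -> R) : Prop :=
  C2 u /\ forall z, dx (dx u) z + dy (dy u) z = 0.

Definition disc (z : C) (r : R) (w : C) : Prop := Cmod (w - z) < r.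

Definition M (u : C -> R) (z : C) (r : R) : Rbar :=
  Lub_Rbar (fun a => exists w, disc z r w /\ a = u w).

(* Main.v *)
Require Import Defs.
From Stdlib Require Import Reals Lra Psatz ClassicalEpsilon Classical ZArith.
From Coquelicot Require Import Coquelicot.
Open Scope R_scope.

Ltac rring := match goal with |- ?a = ?b => change (a = b :> R); ring end.
Ltac rnra := match goal with |- ?a = ?b => change (a = b :> R); nra end.


Lemma dR_plus (f g : R -> R) x a b :
  is_derive f x a -> is_derive g x b -> is_derive (fun t => f t + g t) x (a + b).
Proof. intros Ha Hb. exact (is_derive_plus f g x a b Ha Hb). Qed.

Lemma dR_mult (f g : R -> R) x a b :
  is_derive f x a -> is_derive g x b -> is_derive (fun t => f t * g t) x (a * g x + f x * b).
Proof. intros Ha Hb. exact (is_derive_mult f g x a b Ha Hb Rmult_comm). Qed.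

Lemma dR_val (f : R -> R) x a b : is_derive f x a -> a = b -> is_derive f x b.
Proof. intros H ->. exact H. Qed.

Lemma dR_const (c x : R) : is_derive (fun _ => c) x 0.
Proof. exact (is_derive_const c x). Qed.

Lemma dR_id (x : R) : is_derive (fun t => t) x 1.
Proof. exact (is_derive_id x). Qed.

Lemma cont_of_derive (f : R -> R) x l : is_derive f x l -> continuous f x.
Proof. intros H. apply (ex_derive_continuous (V:=R_NormedModule) f). eexists; exact H. Qed.

Lemma c2_comp (f : R -> R -> R) (X Y : R -> R -> R) x y :
 continuity_2d_pt f (X x y) (Y x y) -> continuity_2d_pt X x y -> continuity_2d_pt Y x y ->
 continuity_2d_pt (fun a b => f (X a b) (Y a b)) x y.
Proof.
intros Hf HX HY. apply continuity_2d_pt_filterlim in Hf, HX, HY.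
apply continuity_2d_pt_filterlim.
apply (filterlim_comp _ _ _ (fun z => (X (fst z) (snd z), Y (fst z) (snd z))) (fun z => f (fst z) (snd z)) _ (locally (X x y, Y x y))); [|exact Hf].
intros P [e He].
destruct (HX (ball (X x y) e) (locally_ball _ e)) as [d1 H1].
destruct (HY (ball (Y x y) e) (locally_ball _ e)) as [d2 H2].
exists (mkposreal _ (Rmin_stable_in_posreal d1 d2)).
intros z Hz. apply He. split.
apply H1. destruct Hz as [Hz1 Hz2]. split; simpl in *. eapply Rlt_le_trans; [apply Hz1|apply Rmin_l]. eapply Rlt_le_trans; [apply Hz2|apply Rmin_l].
apply H2. destruct Hz as [Hz1 Hz2]. split; simpl in *. eapply Rlt_le_trans; [apply Hz1|apply Rmin_r]. eapply Rlt_le_trans; [apply Hz2|apply Rmin_r].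
Qed.

Lemma c2_snd_of1 (g : R -> R) r t : continuous g t -> continuity_2d_pt (fun _ s => g s) r t.
Proof.
intros H. apply continuity_2d_pt_filterlim.
apply (filterlim_comp _ _ _ snd g _ (locally t)); [|exact H].
intros P [e He]. exists e. intros z [_ Hz]. apply He. exact Hz.
Qed.

Lemma c2_fst_of1 (g : R -> R) r t : continuous g r -> continuity_2d_pt (fun s _ => g s) r t.
Proof.
intros H. apply continuity_2d_pt_filterlim.
apply (filterlim_comp _ _ _ fst g _ (locally r)); [|exact H].
intros P [e He]. exists e. intros z [Hz _]. apply He. exact Hz.
Qed.

Lemma c2_to_snd (F : R -> R -> R) r t : continuity_2d_pt F r t -> continuous (F r) t.
Proof.
intros H. apply continuity_2d_pt_filterlim in H.
apply (filterlim_comp _ _ _ (fun s => (r, s)) (fun z => F (fst z) (snd z)) _ (locally (r, t))); [|exact H].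
intros P [e He]. exists e. intros s Hs. apply He. split; [apply ball_center|exact Hs].
Qed.

Lemma c2_to_fst (F : R -> R -> R) r t : continuity_2d_pt F r t -> continuous (fun s => F s t) r.
Proof.
intros H. apply continuity_2d_pt_filterlim in H.
apply (filterlim_comp _ _ _ (fun s => (s, t)) (fun z => F (fst z) (snd z)) _ (locally (r, t))); [|exact H].
intros P [e He]. exists e. intros s Hs. apply He. split; [exact Hs|apply ball_center].
Qed.

Lemma c2_cos r t : continuity_2d_pt (fun _ s => cos s) r t.
Proof. apply c2_snd_of1. apply (ex_derive_continuous (V:=R_NormedModule) cos). eexists. apply is_derive_cos. Qed.
Lemma c2_sin r t : continuity_2d_pt (fun _ s => sin s) r t.
Proof. apply c2_snd_of1. apply (ex_derive_continuous (V:=R_NormedModule) sin). eexists. apply is_derive_sin. Qed.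

Lemma ex_RInt_cont (f : R -> R) a b : (forall t, continuous f t) -> ex_RInt f a b.
Proof. intros H. apply (ex_RInt_continuous (V:=R_CompleteNormedModule) f). intros z _. apply H. Qed.

Lemma RInt_plusR (f g : R -> R) a b : ex_RInt f a b -> ex_RInt g a b ->
  RInt (fun t => f t + g t) a b = RInt f a b + RInt g a b.
Proof. intros Hf Hg. exact (RInt_plus f g a b Hf Hg). Qed.

Lemma RInt_scalR (f : R -> R) a b l : ex_RInt f a b ->
  RInt (fun t => l * f t) a b = l * RInt f a b.
Proof. intros Hf. exact (RInt_scal f a b l Hf). Qed.

Lemma RInt_oppR (f : R -> R) a b : ex_RInt f a b ->
  RInt (fun t => - f t) a b = - RInt f a b.
Proof. intros Hf. exact (RInt_opp f a b Hf). Qed.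

Lemma RInt_extR (f g : R -> R) a b : (forall t, f t = g t) -> RInt f a b = RInt g a b.
Proof. intros H. apply RInt_ext. intros; apply H. Qed.

Lemma RInt_FTC (F f : R -> R) a b : (forall t, is_derive F t (f t)) -> (forall t, continuous f t) ->
  RInt f a b = F b - F a.
Proof. intros H1 H2. apply is_RInt_unique. apply (is_RInt_derive F f). intros; apply H1. intros; apply H2. Qed.

Lemma deriv_param (F dF : R -> R -> R) a b :
 (forall r t, is_derive (fun z => F z t) r (dF r t)) ->
 (forall r t, continuity_2d_pt dF r t) ->
 (forall r t, continuity_2d_pt F r t) ->
 forall r, is_derive (fun r => RInt (F r) a b) r (RInt (dF r) a b).
Proof.
intros HD HdC HC r.
assert (E : forall r, RInt (fun t => Derive (fun z => F z t) r) a b = RInt (dF r) a b).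
{ intros r0. apply RInt_extR. intros t. apply is_derive_unique. apply HD. }
rewrite <- E.
apply (is_derive_RInt_param F a b r).
- apply filter_forall. intros x t _. eexists. apply HD.
- intros t _. apply continuity_2d_pt_ext with (f := dF).
  intros x y. symmetry. apply is_derive_unique. apply HD. apply HdC.
- apply filter_forall. intros y. apply ex_RInt_cont. intros t. apply c2_to_snd. apply HC.
Qed.

Lemma byparts (F dF g dg : R -> R) a b :
  (forall t, is_derive F t (dF t)) -> (forall t, is_derive g t (dg t)) ->
  (forall t, continuous dF t) -> (forall t, continuous dg t) ->
  F b * g b = F a * g a ->
  RInt (fun t => dF t * g t) a b = - RInt (fun t => F t * dg t) a b.
Proof.
intros HF Hg HdF Hdg Hp.
assert (Cf : forall t, continuous F t) by (intros; eapply cont_of_derive; apply HF).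
assert (Cg : forall t, continuous g t) by (intros; eapply cont_of_derive; apply Hg).
assert (H := RInt_FTC (fun t => F t * g t) (fun t => dF t * g t + F t * dg t) a b).
rewrite RInt_plusR in H.
- assert (RInt (fun t : R => dF t * g t) a b + RInt (fun t : R => F t * dg t) a b = 0).
  { rewrite H. lra. intros t. apply dR_mult; auto.
    intros t. apply (continuous_plus (fun t => dF t * g t) (fun t => F t * dg t)).
    apply (continuous_mult dF g); auto. apply (continuous_mult F dg); auto. }
  lra.
- apply ex_RInt_cont. intros t. apply (continuous_mult dF g); auto.
- apply ex_RInt_cont. intros t. apply (continuous_mult F dg); auto.
Qed.
Lemma C1_diff (f : R -> R -> R) x y :
 (forall a b, ex_derive (fun t => f t b) a) -> (forall a b, ex_derive (fun t => f a t) b) ->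
 continuity_2d_pt (fun a b => Derive (fun t => f t b) a) x y ->
 differentiable_pt_lim f x y (Derive (fun t => f t y) x) (Derive (fun t => f x t) y).
Proof.
intros Hx Hy Hc eps.
destruct (Hc (pos_div_2 eps)) as [d1 H1].
assert (Dy : derivable_pt_lim (fun t => f x t) y (Derive (fun t => f x t) y)).
{ apply is_derive_Reals. apply Derive_correct. apply Hy. }
assert (He2 : 0 < eps/2) by (destruct eps; simpl; lra).
destruct (Dy (eps/2) He2) as [d2 H2].
exists (mkposreal _ (Rmin_stable_in_posreal d1 d2)).
intros u v Hu Hv. simpl in Hu, Hv.
assert (Hu1 : Rabs (u - x) < d1) by (eapply Rlt_le_trans; [apply Hu|apply Rmin_l]).
assert (Hv1 : Rabs (v - y) < d1) by (eapply Rlt_le_trans; [apply Hv|apply Rmin_l]).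
assert (Hv2 : Rabs (v - y) < d2) by (eapply Rlt_le_trans; [apply Hv|apply Rmin_r]).
destruct (MVT_gen (fun t => f t v) x u (fun t => Derive (fun s => f s v) t)) as [c [Hc1 Hc2]].
{ intros t _. apply Derive_correct. apply Hx. }
{ intros t _. apply continuity_pt_filterlim. apply (ex_derive_continuous (fun s => f s v)). apply Hx. }
assert (Hcx : Rabs (c - x) < d1).
{ apply Rle_lt_trans with (2 := Hu1). unfold Rmin, Rmax in Hc1. destruct (Rle_dec x u); unfold Rabs; repeat destruct Rcase_abs; lra. }
specialize (H1 c v Hcx Hv1). simpl in H1.
set (lx := Derive (fun t => f t y) x) in *.
set (ly := Derive (fun t => f x t) y) in *.
set (D := Derive (fun s => f s v) c) in *.
assert (Hy2 : Rabs (f x v - f x y - ly * (v - y)) <= eps / 2 * Rabs (v - y)).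
{ destruct (Req_dec v y) as [E|E].
  - subst v. replace (f x y - f x y - ly * (y - y)) with 0 by ring. rewrite Rabs_R0. apply Rmult_le_pos; [lra|apply Rabs_pos].
  - assert (Hh : v - y <> 0) by lra.
    specialize (H2 (v - y) Hh Hv2). replace (y + (v - y)) with v in H2 by ring.
    replace (f x v - f x y - ly * (v - y)) with (((f x v - f x y) / (v - y) - ly) * (v - y)) by (field; auto).
    rewrite Rabs_mult. apply Rmult_le_compat_r; [apply Rabs_pos|lra]. }
assert (Hx2 : Rabs (f u v - f x v - lx * (u - x)) <= eps / 2 * Rabs (u - x)).
{ simpl in Hc2. rewrite Hc2. replace (D * (u - x) - lx * (u - x)) with ((D - lx) * (u - x)) by ring.
  rewrite Rabs_mult. apply Rmult_le_compat_r; [apply Rabs_pos|].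
  apply Rlt_le. exact H1. }
replace (f u v - f x y - (lx * (u - x) + ly * (v - y))) with ((f u v - f x v - lx * (u - x)) + (f x v - f x y - ly * (v - y))) by ring.
eapply Rle_trans; [apply Rabs_triang|].
assert (Rabs (u - x) <= Rmax (Rabs (u - x)) (Rabs (v - y))) by apply Rmax_l.
assert (Rabs (v - y) <= Rmax (Rabs (u - x)) (Rabs (v - y))) by apply Rmax_r.
destruct eps as [e ep]; simpl in *.
assert (e/2 * Rabs (u - x) <= e/2 * Rmax (Rabs (u - x)) (Rabs (v - y))) by (apply Rmult_le_compat_l; lra).
assert (e/2 * Rabs (v - y) <= e/2 * Rmax (Rabs (u - x)) (Rabs (v - y))) by (apply Rmult_le_compat_l; lra).
lra.
Qed.

Definition Cont (f : C -> R) : Prop := forall x y, continuity_2d_pt (curry2 f) x y.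

Definition C1 (f : C -> R) : Prop :=
  (forall z, ex_derive (fun t => f (t, snd z)) (fst z)) /\
  (forall z, ex_derive (fun t => f (fst z, t)) (snd z)) /\
  Cont (dx f) /\ Cont (dy f).

Lemma C1_differentiable f : C1 f -> forall x y,
  differentiable_pt_lim (curry2 f) x y (dx f (x, y)) (dy f (x, y)).
Proof.
intros [H1 [H2 [H3 H4]]] x y.
apply (C1_diff (curry2 f) x y).
- intros a b. exact (H1 (a, b)).
- intros a b. exact (H2 (a, b)).
- exact (H3 x y).
Qed.

Lemma C1_Cont f : C1 f -> Cont f.
Proof.
intros H x y. apply differentiable_continuity_pt. exists (dx f (x, y)), (dy f (x, y)).
apply C1_differentiable; auto.
Qed.

Lemma chain f : C1 f -> forall (X Y : R -> R) t dX dY,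
  is_derive X t dX -> is_derive Y t dY ->
  is_derive (fun s => f (X s, Y s)) t (dx f (X t, Y t) * dX + dy f (X t, Y t) * dY).
Proof.
intros Hf X Y t dX dY HX HY.
apply is_derive_Reals.
apply (derivable_pt_lim_comp_2d (curry2 f) X Y t).
- apply C1_differentiable; auto.
- apply is_derive_Reals; auto.
- apply is_derive_Reals; auto.
Qed.

Lemma harmonic_C1 u : harmonic u -> C1 u /\ C1 (dx u) /\ C1 (dy u).
Proof.
intros [[H1 [H2 [H3 H4]]] _].
destruct (H3 (dx u) (or_introl eq_refl)) as [A1 A2].
destruct (H3 (dy u) (or_intror eq_refl)) as [B1 B2].
split; [|split].
- repeat split; auto.
  + intros x y. apply H4. tauto.
  + intros x y. apply H4. tauto.
- repeat split; auto.
  + intros x y. apply H4. tauto.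
  + intros x y. apply H4. tauto.
- repeat split; auto.
  + intros x y. apply H4. tauto.
  + intros x y. apply H4. tauto.
Qed.

Definition PF (f : C -> R) (q : C) (r t : R) : R := f (fst q + r * cos t, snd q + r * sin t).

Lemma PF_dr f q : C1 f -> forall r t,
  is_derive (fun r => PF f q r t) r (PF (dx f) q r t * cos t + PF (dy f) q r t * sin t).
Proof.
intros Hf r t. unfold PF.
apply dR_val with (a := dx f (fst q + r * cos t, snd q + r * sin t) * cos t + dy f (fst q + r * cos t, snd q + r * sin t) * sin t).
2: reflexivity.
apply (chain f Hf (fun r => fst q + r * cos t) (fun r => snd q + r * sin t)).
- apply dR_val with (a := 0 + (1 * cos t + r * 0)). apply (dR_plus (fun _ => fst q) (fun r => r * cos t)). apply dR_const. apply (dR_mult (fun r => r) (fun _ => cos t)). apply dR_id. apply dR_const. rring.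
- apply dR_val with (a := 0 + (1 * sin t + r * 0)). apply (dR_plus (fun _ => snd q) (fun r => r * sin t)). apply dR_const. apply (dR_mult (fun r => r) (fun _ => sin t)). apply dR_id. apply dR_const. rring.
Qed.

Lemma PF_dt f q : C1 f -> forall r t,
  is_derive (fun t => PF f q r t) t (PF (dx f) q r t * (- (r * sin t)) + PF (dy f) q r t * (r * cos t)).
Proof.
intros Hf r t. unfold PF.
apply (chain f Hf (fun t => fst q + r * cos t) (fun t => snd q + r * sin t)).
- apply dR_val with (a := 0 + (0 * cos t + r * (- sin t))). apply (dR_plus (fun _ => fst q) (fun t => r * cos t)). apply dR_const. apply (dR_mult (fun _ => r) cos). apply dR_const. apply is_derive_cos. rring.
- apply dR_val with (a := 0 + (0 * sin t + r * cos t)). apply (dR_plus (fun _ => snd q) (fun t => r * sin t)). apply dR_const. apply (dR_mult (fun _ => r) sin). apply dR_const. apply is_derive_sin. rring.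
Qed.

Lemma PF_cont f q : Cont f -> forall r t, continuity_2d_pt (PF f q) r t.
Proof.
intros Hf r t. unfold PF.
apply (c2_comp (curry2 f) (fun r t => fst q + r * cos t) (fun r t => snd q + r * sin t)).
- apply Hf.
- apply continuity_2d_pt_plus. apply continuity_2d_pt_const. apply continuity_2d_pt_mult. apply continuity_2d_pt_id1. apply c2_cos.
- apply continuity_2d_pt_plus. apply continuity_2d_pt_const. apply continuity_2d_pt_mult. apply continuity_2d_pt_id1. apply c2_sin.
Qed.

Lemma PF_2PI f q r : PF f q r (2 * PI) = PF f q r 0.
Proof. unfold PF. rewrite cos_2PI, sin_2PI, cos_0, sin_0. reflexivity. Qed.

Lemma PF_0 f q t : PF f q 0 t = f q.
Proof. unfold PF. destruct q as [a b]. simpl. f_equal; f_equal; ring. Qed.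

Definition Dr u q r t := PF (dx u) q r t * cos t + PF (dy u) q r t * sin t.
Definition dP u q r t := Dr u q r t + r * ((PF (dx (dx u)) q r t * cos t + PF (dy (dx u)) q r t * sin t) * cos t
   + (PF (dx (dy u)) q r t * cos t + PF (dy (dy u)) q r t * sin t) * sin t).
Definition Qf u q r t := (- PF (dx u) q r t) * sin t + PF (dy u) q r t * cos t.
Definition dUx_t u q r t := PF (dx (dx u)) q r t * (- (r * sin t)) + PF (dy (dx u)) q r t * (r * cos t).
Definition dUy_t u q r t := PF (dx (dy u)) q r t * (- (r * sin t)) + PF (dy (dy u)) q r t * (r * cos t).
Definition dQ u q r t := (- dUx_t u q r t) * sin t + (- PF (dx u) q r t) * cos t + (dUy_t u q r t * cos t + PF (dy u) q r t * (- sin t)).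
Definition dU_t u q r t := PF (dx u) q r t * (- (r * sin t)) + PF (dy u) q r t * (r * cos t).

Definition Wok (w w1 w2 : R -> R) : Prop :=
  (forall t, is_derive w t (w1 t)) /\ (forall t, is_derive w1 t (w2 t)) /\ (forall t, continuous w2 t)
  /\ w (2 * PI) = w 0 /\ w1 (2 * PI) = w1 0.

Ltac c2tac := repeat first
  [ apply continuity_2d_pt_plus | apply continuity_2d_pt_mult | apply continuity_2d_pt_opp
  | apply continuity_2d_pt_id1 | apply continuity_2d_pt_id2 | apply c2_cos | apply c2_sin
  | apply continuity_2d_pt_const | apply PF_cont; assumption ].


Lemma harm_conts u : harmonic u -> Cont u /\ Cont (dx u) /\ Cont (dy u) /\ Cont (dx (dx u)) /\
   Cont (dy (dx u)) /\ Cont (dx (dy u)) /\ Cont (dy (dy u)).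
Proof.
intros Hu. destruct (harmonic_C1 u Hu) as [A [B C']].
assert (Cu := C1_Cont u A).
destruct A as [_ [_ [A3 A4]]]. destruct B as [_ [_ [B3 B4]]]. destruct C' as [_ [_ [C3 C4]]].
tauto.
Qed.

Lemma Wcont w w1 w2 : Wok w w1 w2 -> (forall t, continuous w t) /\ (forall t, continuous w1 t).
Proof. intros [H1 [H2 _]]. split; intros t; eapply cont_of_derive; eauto. Qed.

Lemma c2w (w : R -> R) : (forall t, continuous w t) -> forall r t, continuity_2d_pt (fun _ s => w s) r t.
Proof. intros H r t. apply c2_snd_of1. apply H. Qed.

Lemma key_identity u q r t : harmonic u -> dP u q r t = - dQ u q r t.
Proof.
intros [_ Hl].
assert (E := Hl (fst q + r * cos t, snd q + r * sin t)).
assert (S := sin2_cos2 t). unfold Rsqr in S.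
assert (K : dP u q r t + dQ u q r t = r * (dx (dx u) (fst q + r * cos t, snd q + r * sin t) + dy (dy u) (fst q + r * cos t, snd q + r * sin t)) * (sin t * sin t + cos t * cos t)).
{ unfold dP, dQ, Dr, dUx_t, dUy_t, PF. ring. }
rewrite E, S in K. lra.
Qed.

Lemma Dr_deriv u q : harmonic u -> forall r t,
  is_derive (fun z => Dr u q z t) r
   ((PF (dx (dx u)) q r t * cos t + PF (dy (dx u)) q r t * sin t) * cos t
   + (PF (dx (dy u)) q r t * cos t + PF (dy (dy u)) q r t * sin t) * sin t).
Proof.
intros Hu r t. destruct (harmonic_C1 u Hu) as [_ [Hx Hy]]. unfold Dr.
apply (dR_plus (fun z => PF (dx u) q z t * cos t) (fun z => PF (dy u) q z t * sin t)).
- eapply dR_val. apply (dR_mult (fun z => PF (dx u) q z t) (fun _ => cos t)). apply PF_dr; auto. apply dR_const. rring.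
- eapply dR_val. apply (dR_mult (fun z => PF (dy u) q z t) (fun _ => sin t)). apply PF_dr; auto. apply dR_const. rring.
Qed.

Lemma a_deriv u q w : harmonic u -> (forall t, continuous w t) -> forall r,
  is_derive (fun r => RInt (fun t => PF u q r t * w t) 0 (2*PI)) r (RInt (fun t => Dr u q r t * w t) 0 (2*PI)).
Proof.
intros Hu Hw. destruct (harmonic_C1 u Hu) as [H0 _].
destruct (harm_conts u Hu) as [C0 [C1' [C2' _]]].
apply (deriv_param (fun r t => PF u q r t * w t) (fun r t => Dr u q r t * w t)).
- intros r t. eapply dR_val. apply (dR_mult (fun z => PF u q z t) (fun _ => w t)). apply PF_dr; auto. apply dR_const.
  unfold Dr. rring.
- intros r t. unfold Dr. apply continuity_2d_pt_mult; [c2tac | apply c2w; auto].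
- intros r t. apply continuity_2d_pt_mult; [c2tac | apply c2w; auto].
Qed.

Lemma G_deriv u q w : harmonic u -> (forall t, continuous w t) -> forall r,
  is_derive (fun r => RInt (fun t => (r * Dr u q r t) * w t) 0 (2*PI)) r (RInt (fun t => dP u q r t * w t) 0 (2*PI)).
Proof.
intros Hu Hw.
destruct (harm_conts u Hu) as [C0 [C1' [C2' [C3' [C4' [C5' C6']]]]]].
apply (deriv_param (fun r t => (r * Dr u q r t) * w t) (fun r t => dP u q r t * w t)).
- intros r t. eapply dR_val. apply (dR_mult (fun z => z * Dr u q z t) (fun _ => w t)).
  apply (dR_mult (fun z => z) (fun z => Dr u q z t)). apply dR_id. apply Dr_deriv; auto. apply dR_const.
  unfold dP. rring.
- intros r t. unfold dP, Dr. apply continuity_2d_pt_mult; [c2tac | apply c2w; auto].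
- intros r t. unfold Dr. apply continuity_2d_pt_mult; [c2tac | apply c2w; auto].
Qed.

Lemma dR_opp (f : R -> R) x a : is_derive f x a -> is_derive (fun t => - f t) x (- a).
Proof. intros H. exact (is_derive_opp f x a H). Qed.

Lemma c2_snd_cont (F : R -> R -> R) r : (forall r t, continuity_2d_pt F r t) -> forall t, continuous (F r) t.
Proof. intros H t. apply c2_to_snd. apply H. Qed.

Lemma Qf_deriv u q r : harmonic u -> forall t, is_derive (Qf u q r) t (dQ u q r t).
Proof.
intros Hu t. destruct (harmonic_C1 u Hu) as [_ [Hx Hy]]. unfold Qf, dQ.
apply (dR_plus (fun t => (- PF (dx u) q r t) * sin t) (fun t => PF (dy u) q r t * cos t)).
- apply (dR_mult (fun t => - PF (dx u) q r t) sin). apply dR_opp. apply PF_dt; auto. apply is_derive_sin.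
- apply (dR_mult (fun t => PF (dy u) q r t) cos). apply PF_dt; auto. apply is_derive_cos.
Qed.

Lemma Gp_eq u q w w1 w2 : harmonic u -> Wok w w1 w2 -> forall r,
  RInt (fun t => dP u q r t * w t) 0 (2*PI) = RInt (fun t => Qf u q r t * w1 t) 0 (2*PI).
Proof.
intros Hu Hw r. destruct (Wcont _ _ _ Hw) as [Cw Cw1].
destruct (harm_conts u Hu) as [C0 [C1' [C2' [C3' [C4' [C5' C6']]]]]].
destruct Hw as [D1 [D2 [Cw2 [P1 P2]]]].
rewrite (RInt_extR _ (fun t => - (dQ u q r t * w t))).
2: { intros t. rewrite key_identity; auto. ring. }
rewrite RInt_oppR.
2: { apply ex_RInt_cont. intros t. apply (continuous_mult (dQ u q r) w); auto.
     apply c2_snd_cont. intros; unfold dQ, dUx_t, dUy_t; c2tac. }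
rewrite (byparts (Qf u q r) (dQ u q r) w w1 0 (2*PI)).
- rring.
- apply Qf_deriv; auto.
- exact D1.
- apply c2_snd_cont. intros; unfold dQ, dUx_t, dUy_t; c2tac.
- exact Cw1.
- unfold Qf. rewrite !PF_2PI, sin_2PI, cos_2PI, sin_0, cos_0, P1. reflexivity.
Qed.

Lemma rGp u q w w1 w2 : harmonic u -> Wok w w1 w2 -> forall r,
  r * RInt (fun t => Qf u q r t * w1 t) 0 (2*PI) = - RInt (fun t => PF u q r t * w2 t) 0 (2*PI).
Proof.
intros Hu Hw r. destruct (Wcont _ _ _ Hw) as [Cw Cw1].
destruct (harm_conts u Hu) as [C0 [C1' [C2' [C3' [C4' [C5' C6']]]]]].
destruct (harmonic_C1 u Hu) as [H0 _].
destruct Hw as [D1 [D2 [Cw2 [P1 P2]]]].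
rewrite <- RInt_scalR.
2: { apply ex_RInt_cont. intros t. apply (continuous_mult (Qf u q r) w1); auto.
     apply c2_snd_cont. intros; unfold Qf; c2tac. }
rewrite (RInt_extR _ (fun t => dU_t u q r t * w1 t)).
2: { intros t. unfold dU_t, Qf. ring. }
apply (byparts (PF u q r) (dU_t u q r) w1 w2 0 (2*PI)).
- intros t. apply PF_dt; auto.
- exact D2.
- apply c2_snd_cont. intros; unfold dU_t; c2tac.
- exact Cw2.
- rewrite PF_2PI, P2. reflexivity.
Qed.

Lemma G_eq u q w r : harmonic u -> (forall t, continuous w t) ->
  RInt (fun t => (r * Dr u q r t) * w t) 0 (2*PI) = r * RInt (fun t => Dr u q r t * w t) 0 (2*PI).
Proof.
intros Hu Cw.
destruct (harm_conts u Hu) as [C0 [C1' [C2' [C3' [C4' [C5' C6']]]]]].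
rewrite <- RInt_scalR.
- apply RInt_extR. intros t. ring.
- apply ex_RInt_cont. intros t. apply (continuous_mult (Dr u q r) w); auto.
  apply c2_snd_cont. intros; unfold Dr; c2tac.
Qed.

Lemma const_of_deriv0 (h : R -> R) : (forall r, is_derive h r 0) -> forall x y, h x = h y.
Proof.
intros H x y.
destruct (MVT_gen h x y (fun _ => 0)) as [c [_ Hc]].
- intros; apply H.
- intros z _. apply continuity_pt_filterlim. eapply cont_of_derive. apply H.
- lra.
Qed.

Lemma ode1 (a a' G G' : R -> R) :
  (forall r, is_derive a r (a' r)) -> (forall r, is_derive G r (G' r)) ->
  (forall r, G r = r * a' r) -> (forall r, r * G' r = a r) -> forall r, 0 < r -> a r = r * a' 0.
Proof.
intros Ha HG E1 E2.
assert (Hh : forall r, is_derive (fun r => r * (G r - a r)) r 0).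
{ intros r. eapply dR_val. apply (dR_mult (fun r => r) (fun r => G r - a r)). apply dR_id.
  apply (dR_plus G (fun r => - a r)). apply HG. apply dR_opp. apply Ha.
  change ((1 * (G r - a r) + r * (G' r + - a' r)) = 0). rewrite <- E2 in *. rewrite E1. ring. }
assert (A0 : a 0 = 0) by (rewrite <- E2; ring).
assert (Ga : forall r, 0 < r -> r * a' r = a r).
{ intros r Hr. rewrite <- E1. assert (Z := const_of_deriv0 _ Hh r 0). simpl in Z.
  rewrite Rmult_0_l in Z. apply Rmult_integral in Z. destruct Z; lra. }
assert (Hk : forall s, 0 < s -> is_derive (fun s => a s * / s) s 0).
{ intros s Hs. eapply dR_val. apply (dR_mult a (fun s => / s)). apply Ha.
  apply (is_derive_inv (fun s => s)). apply dR_id. lra.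
  change (a' s * / s + a s * (- 1 / s ^ 2) = 0). rewrite <- (Ga s Hs). field. lra. }
assert (K : forall r, 0 < r -> a r = r * a 1).
{ intros r Hr.
  destruct (MVT_gen (fun s => a s * / s) 1 r (fun _ => 0)) as [c [Hc Hc2]].
  - intros x Hx. apply Hk. unfold Rmin, Rmax in Hx. destruct (Rle_dec 1 r); lra.
  - intros x Hx. apply continuity_pt_filterlim. apply (cont_of_derive (fun s => a s * / s) x 0). apply Hk.
    unfold Rmin, Rmax in Hx. destruct (Rle_dec 1 r); lra.
  - simpl in Hc2. rewrite Rinv_1, Rmult_1_r in Hc2.
    assert (a r * / r = a 1) by lra.
    replace (a r) with (a r * / r * r) by (field; lra). rewrite H. ring. }
assert (L : a' 0 = a 1).
{ destruct (Req_dec (a' 0) (a 1)) as [E|E]; auto. exfalso.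
  assert (P : 0 < Rabs (a' 0 - a 1)) by (apply Rabs_pos_lt; lra).
  assert (Ha0 := proj1 (is_derive_Reals a 0 (a' 0)) (Ha 0)).
  destruct (Ha0 _ P) as [d Hd].
  assert (Hd2 : 0 < d / 2) by (destruct d; simpl; lra).
  specialize (Hd (d / 2) ltac:(lra)).
  assert (Rabs (d / 2) < d) by (rewrite Rabs_right; destruct d; simpl in *; lra).
  specialize (Hd H). rewrite Rplus_0_l, K, A0 in Hd by lra.
  replace ((d / 2 * a 1 - 0) / (d / 2) - a' 0) with (- (a' 0 - a 1)) in Hd by (field; lra).
  rewrite Rabs_Ropp in Hd. lra. }
intros r Hr. rewrite L. apply K; auto.
Qed.

Lemma ode0 (a a' G : R -> R) :
  (forall r, is_derive a r (a' r)) -> (forall r, is_derive G r 0) ->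
  (forall r, G r = r * a' r) -> forall r, 0 < r -> a r = a 0.
Proof.
intros Ha HG E r Hr.
assert (Z : forall s, 0 < s -> a' s = 0).
{ intros s Hs. assert (W := const_of_deriv0 G HG s 0). rewrite !E, Rmult_0_l in W.
  apply Rmult_integral in W. destruct W; lra. }
destruct (MVT_gen a 0 r (fun _ => 0)) as [c [_ Hc]].
- intros x Hx. unfold Rmin, Rmax in Hx. destruct (Rle_dec 0 r); try lra. rewrite <- (Z x); [apply Ha|lra].
- intros x _. apply continuity_pt_filterlim. eapply cont_of_derive. apply Ha.
- lra.
Qed.

Lemma Wok_cos : Wok cos (fun t => - sin t) (fun t => - cos t).
Proof.
unfold Wok; split; [|split; [|split; [|split]]].
- intros t. apply is_derive_cos.
- intros t. apply dR_opp. apply is_derive_sin.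
- intros t. apply (cont_of_derive (fun t => - cos t) t (- - sin t)). apply dR_opp. apply is_derive_cos.
- rewrite cos_2PI, cos_0. reflexivity.
- rewrite sin_2PI, sin_0. reflexivity.
Qed.

Lemma Wok_sin : Wok sin cos (fun t => - sin t).
Proof.
unfold Wok; split; [|split; [|split; [|split]]].
- intros t. apply is_derive_sin.
- intros t. apply is_derive_cos.
- intros t. apply (cont_of_derive (fun t => - sin t) t (- cos t)). apply dR_opp. apply is_derive_sin.
- rewrite sin_2PI, sin_0. reflexivity.
- rewrite cos_2PI, cos_0. reflexivity.
Qed.

Lemma Wok_1 : Wok (fun _ => 1) (fun _ => 0) (fun _ => 0).
Proof.
unfold Wok; split; [|split; [|split; [|split]]].
- intros t. apply dR_const.
- intros t. apply dR_const.
- intros t. apply (cont_of_derive (fun _ => 0) t 0). apply dR_const.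
- reflexivity.
- reflexivity.
Qed.

Lemma RInt_zero a b : RInt (fun _ => 0) a b = 0.
Proof. rewrite RInt_const. change ((b - a) * 0 = 0). ring. Qed.

Lemma cont_PFw u q r w : harmonic u -> (forall t, continuous w t) -> forall t, continuous (fun t => PF u q r t * w t) t.
Proof.
intros Hu Hw t. destruct (harm_conts u Hu) as [C0 _].
apply (continuous_mult (PF u q r) w); auto. apply c2_to_snd. apply PF_cont; auto.
Qed.

Lemma odd_formula u q w w1 w2 : harmonic u -> Wok w w1 w2 -> (forall t, w2 t = - w t) ->
  forall r, 0 < r -> RInt (fun t => PF u q r t * w t) 0 (2*PI) = r * RInt (fun t => Dr u q 0 t * w t) 0 (2*PI).
Proof.
intros Hu Hw Hw2.
destruct (Wcont _ _ _ Hw) as [Cw Cw1].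
apply (ode1 (fun r => RInt (fun t => PF u q r t * w t) 0 (2*PI)) (fun r => RInt (fun t => Dr u q r t * w t) 0 (2*PI))
             (fun r => RInt (fun t => (r * Dr u q r t) * w t) 0 (2*PI)) (fun r => RInt (fun t => dP u q r t * w t) 0 (2*PI))).
- apply a_deriv; auto.
- apply G_deriv; auto.
- intros r. apply G_eq; auto.
- intros r. rewrite (Gp_eq u q w w1 w2 Hu Hw r), (rGp u q w w1 w2 Hu Hw r).
  rewrite (RInt_extR _ (fun t => - (PF u q r t * w t))).
  + rewrite RInt_oppR. ring. apply ex_RInt_cont. apply cont_PFw; auto.
  + intros t. rewrite Hw2. ring.
Qed.

Lemma mvp u q r : harmonic u -> 0 < r -> RInt (fun t => PF u q r t) 0 (2*PI) = 2 * PI * u q.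
Proof.
intros Hu Hr.
rewrite (RInt_extR _ (fun t => PF u q r t * 1)) by (intros; ring).
rewrite (ode0 (fun r => RInt (fun t => PF u q r t * 1) 0 (2*PI)) (fun r => RInt (fun t => Dr u q r t * 1) 0 (2*PI))
             (fun r => RInt (fun t => (r * Dr u q r t) * 1) 0 (2*PI))); auto.
- rewrite (RInt_extR _ (fun t => u q)) by (intros; rewrite PF_0; ring).
  rewrite RInt_const. change ((2 * PI - 0) * u q = 2 * PI * u q). ring.
- apply a_deriv; auto. intros t. apply (cont_of_derive (fun _ => 1) t 0). apply dR_const.
- intros r0. eapply dR_val. apply G_deriv; auto. intros t. apply (cont_of_derive (fun _ => 1) t 0). apply dR_const.
  transitivity (RInt (fun t => Qf u q r0 t * 0) 0 (2*PI)). apply (Gp_eq u q _ _ _ Hu Wok_1 r0).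
  rewrite (RInt_extR _ (fun _ => 0)) by (intros; ring). apply RInt_zero.
- intros r0. apply G_eq; auto. intros t. apply (cont_of_derive (fun _ => 1) t 0). apply dR_const.
Qed.

Lemma Dr0 u q t : Dr u q 0 t = dx u q * cos t + dy u q * sin t.
Proof. unfold Dr. rewrite !PF_0. reflexivity. Qed.

Lemma int_cos2 A B : RInt (fun t => (A * cos t + B * sin t) * cos t) 0 (2*PI) = PI * A.
Proof.
rewrite (RInt_FTC (fun t => A * ((t + sin t * cos t) / 2) + B * (sin t * sin t / 2))).
- rewrite sin_2PI, cos_2PI, sin_0, cos_0. change (A * ((2 * PI + 0 * 1) / 2) + B * (0 * 0 / 2) - (A * ((0 + 0 * 1) / 2) + B * (0 * 0 / 2)) = PI * A). field.
- intros t. auto_derive; auto. assert (S := sin2_cos2 t). unfold Rsqr in S.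
  match goal with |- ?x = ?y => change (x = y :> R); replace x with (y + A/2 * (1 - (sin t * sin t + cos t * cos t))) by field end.
  rewrite S. ring.
- intros t. apply (cont_of_derive _ t (- (A * sin t + B * (- cos t)) * cos t + (A * cos t + B * sin t) * (- sin t))).
  auto_derive; auto. ring.
Qed.

Lemma int_sin2 A B : RInt (fun t => (A * cos t + B * sin t) * sin t) 0 (2*PI) = PI * B.
Proof.
rewrite (RInt_FTC (fun t => A * (sin t * sin t / 2) + B * ((t - sin t * cos t) / 2))).
- rewrite sin_2PI, cos_2PI, sin_0, cos_0. change (A * (0 * 0 / 2) + B * ((2 * PI - 0 * 1) / 2) - (A * (0 * 0 / 2) + B * ((0 - 0 * 1) / 2)) = PI * B). field.
- intros t. auto_derive; auto. assert (S := sin2_cos2 t). unfold Rsqr in S.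
  match goal with |- ?x = ?y => change (x = y :> R); replace x with (y + B/2 * (1 - (sin t * sin t + cos t * cos t))) by field end.
  rewrite S. ring.
- intros t. apply (cont_of_derive _ t ((- (A * sin t) + B * cos t) * sin t + (A * cos t + B * sin t) * cos t)).
  auto_derive; auto. ring.
Qed.

Lemma grad_x u q r : harmonic u -> 0 < r -> RInt (fun t => PF u q r t * cos t) 0 (2*PI) = r * (PI * dx u q).
Proof.
intros Hu Hr. rewrite (odd_formula u q _ _ _ Hu Wok_cos) by (auto; intros; reflexivity).
f_equal. rewrite (RInt_extR _ (fun t => (dx u q * cos t + dy u q * sin t) * cos t)) by (intros; rewrite Dr0; ring).
apply int_cos2.
Qed.

Lemma grad_y u q r : harmonic u -> 0 < r -> RInt (fun t => PF u q r t * sin t) 0 (2*PI) = r * (PI * dy u q).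
Proof.
intros Hu Hr. rewrite (odd_formula u q _ _ _ Hu Wok_sin) by (auto; intros; reflexivity).
f_equal. rewrite (RInt_extR _ (fun t => (dx u q * cos t + dy u q * sin t) * sin t)) by (intros; rewrite Dr0; ring).
apply int_sin2.
Qed.

Lemma RInt_minusR (f g : R -> R) a b : ex_RInt f a b -> ex_RInt g a b ->
  RInt (fun t => f t - g t) a b = RInt f a b - RInt g a b.
Proof. intros Hf Hg. exact (RInt_minus f g a b Hf Hg). Qed.

Lemma PI2_pos : 0 <= 2 * PI.
Proof. assert (H := PI_RGT_0). lra. Qed.

Lemma abs_int_weight (f w : R -> R) : (forall t, continuous f t) -> (forall t, continuous w t) ->
  (forall t, 0 <= f t) -> (forall t, Rabs (w t) <= 1) ->
  Rabs (RInt (fun t => f t * w t) 0 (2*PI)) <= RInt f 0 (2*PI).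
Proof.
intros Cf Cw Pf Bw.
eapply Rle_trans. apply abs_RInt_le. apply PI2_pos.
apply ex_RInt_cont. intros t. apply (continuous_mult f w); auto.
apply RInt_le. apply PI2_pos.
apply ex_RInt_cont. intros t. apply (continuous_comp (fun t => f t * w t) Rabs).
apply (continuous_mult f w); auto. apply continuous_Rabs.
apply ex_RInt_cont; auto.
intros t _. rewrite Rabs_mult, (Rabs_right (f t)) by (apply Rle_ge; auto).
specialize (Bw t). specialize (Pf t). nra.
Qed.

Lemma cos_abs t : Rabs (cos t) <= 1.
Proof. destruct (COS_bound t). apply Rabs_le. lra. Qed.
Lemma sin_abs t : Rabs (sin t) <= 1.
Proof. destruct (SIN_bound t). apply Rabs_le. lra. Qed.

Lemma cont_cos t : continuous cos t.
Proof. apply (cont_of_derive cos t (- sin t)). apply is_derive_cos. Qed.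
Lemma cont_sin t : continuous sin t.
Proof. apply (cont_of_derive sin t (cos t)). apply is_derive_sin. Qed.
Lemma cont_const (c t : R) : continuous (fun _ => c) t.
Proof. apply (cont_of_derive (fun _ => c) t 0). apply dR_const. Qed.

Lemma int_w_zero (w : R -> R) (k : R) : (w = cos \/ w = sin) -> RInt (fun t => k * w t) 0 (2*PI) = 0.
Proof.
intros [-> | ->].
- rewrite (RInt_FTC (fun t => k * sin t)). rewrite sin_2PI, sin_0. rring.
  intros t. apply is_derive_scal. apply is_derive_sin.
  intros t. apply (continuous_mult (fun _ => k) cos). apply cont_const. apply cont_cos.
- rewrite (RInt_FTC (fun t => k * - cos t)). rewrite cos_2PI, cos_0. rring.
  intros t. eapply dR_val. apply is_derive_scal. apply dR_opp. apply is_derive_cos. rring.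
  intros t. apply (continuous_mult (fun _ => k) sin). apply cont_const. apply cont_sin.
Qed.

Lemma cont_PF u q r t : harmonic u -> continuous (PF u q r) t.
Proof. intros Hu. apply c2_to_snd. apply PF_cont. apply harm_conts; auto. Qed.


Lemma est_low u q r k w : harmonic u -> 0 < r -> (w = cos \/ w = sin) ->
  (forall t, k <= PF u q r t) ->
  Rabs (RInt (fun t => PF u q r t * w t) 0 (2*PI)) <= 2 * PI * (u q - k).
Proof.
intros Hu Hr Hw Hk.
assert (Cw : forall t, continuous w t) by (destruct Hw as [-> | ->]; [apply cont_cos|apply cont_sin]).
assert (Bw : forall t, Rabs (w t) <= 1) by (destruct Hw as [-> | ->]; [apply cos_abs|apply sin_abs]).
assert (CU := fun t => cont_PF u q r t Hu).
assert (E : RInt (fun t => PF u q r t * w t) 0 (2*PI) = RInt (fun t => (PF u q r t - k) * w t) 0 (2*PI)).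
{ rewrite (RInt_extR (fun t => (PF u q r t - k) * w t) (fun t => PF u q r t * w t - k * w t)) by (intros; ring).
  rewrite (RInt_minusR (fun t => PF u q r t * w t) (fun t => k * w t)), int_w_zero; auto. rewrite Rminus_0_r. reflexivity.
  apply ex_RInt_cont. intros t. apply (continuous_mult (PF u q r) w); auto.
  apply ex_RInt_cont. intros t. apply (continuous_mult (fun _ => k) w); auto. apply cont_const. }
rewrite E. eapply Rle_trans. apply (abs_int_weight (fun t => PF u q r t - k) w); auto.
- intros t. apply (continuous_minus (PF u q r) (fun _ => k)); auto. apply cont_const.
- intros t. specialize (Hk t). lra.
- rewrite (RInt_minusR (PF u q r) (fun _ => k)), mvp, RInt_const by (auto; apply ex_RInt_cont; auto; apply cont_const).
  change (2 * PI * u q - (2 * PI - 0) * k <= 2 * PI * (u q - k)). lra.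
Qed.

Lemma est_up u q r K w : harmonic u -> 0 < r -> (w = cos \/ w = sin) ->
  (forall t, PF u q r t <= K) ->
  Rabs (RInt (fun t => PF u q r t * w t) 0 (2*PI)) <= 2 * PI * (K - u q).
Proof.
intros Hu Hr Hw Hk.
assert (Cw : forall t, continuous w t) by (destruct Hw as [-> | ->]; [apply cont_cos|apply cont_sin]).
assert (Bw : forall t, Rabs (w t) <= 1) by (destruct Hw as [-> | ->]; [apply cos_abs|apply sin_abs]).
assert (CU := fun t => cont_PF u q r t Hu).
assert (E : RInt (fun t => PF u q r t * w t) 0 (2*PI) = - RInt (fun t => (K - PF u q r t) * w t) 0 (2*PI)).
{ rewrite (RInt_extR (fun t => (K - PF u q r t) * w t) (fun t => K * w t - PF u q r t * w t)) by (intros; ring).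
  rewrite (RInt_minusR (fun t => K * w t) (fun t => PF u q r t * w t)), int_w_zero; auto. rewrite Rminus_0_l, Ropp_involutive. reflexivity.
  apply ex_RInt_cont. intros t. apply (continuous_mult (fun _ => K) w); auto. apply cont_const.
  apply ex_RInt_cont. intros t. apply (continuous_mult (PF u q r) w); auto. }
rewrite E, Rabs_Ropp. eapply Rle_trans. apply (abs_int_weight (fun t => K - PF u q r t) w); auto.
- intros t. apply (continuous_minus (fun _ => K) (PF u q r)); auto. apply cont_const.
- intros t. specialize (Hk t). lra.
- rewrite (RInt_minusR (fun _ => K) (PF u q r)), mvp, RInt_const by (auto; apply ex_RInt_cont; auto; apply cont_const).
  change ((2 * PI - 0) * K - 2 * PI * u q <= 2 * PI * (K - u q)). lra.
Qed.

Lemma grad_low u q r k : harmonic u -> 0 < r -> (forall t, k <= PF u q r t) ->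
  Rabs (dx u q) <= 2 * (u q - k) / r /\ Rabs (dy u q) <= 2 * (u q - k) / r.
Proof.
intros Hu Hr Hk. assert (P := PI_RGT_0).
assert (X := est_low u q r k cos Hu Hr (or_introl eq_refl) Hk).
assert (Y := est_low u q r k sin Hu Hr (or_intror eq_refl) Hk).
rewrite grad_x in X by auto. rewrite grad_y in Y by auto.
rewrite !Rabs_mult, (Rabs_right r), (Rabs_right PI) in X, Y by lra.
split; apply (Rmult_le_reg_l (r * PI)); try nra;
  replace (r * PI * (2 * (u q - k) / r)) with (2 * PI * (u q - k)) by (field; lra); lra.
Qed.

Lemma grad_up u q r K : harmonic u -> 0 < r -> (forall t, PF u q r t <= K) ->
  Rabs (dx u q) <= 2 * (K - u q) / r /\ Rabs (dy u q) <= 2 * (K - u q) / r.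
Proof.
intros Hu Hr Hk. assert (P := PI_RGT_0).
assert (X := est_up u q r K cos Hu Hr (or_introl eq_refl) Hk).
assert (Y := est_up u q r K sin Hu Hr (or_intror eq_refl) Hk).
rewrite grad_x in X by auto. rewrite grad_y in Y by auto.
rewrite !Rabs_mult, (Rabs_right r), (Rabs_right PI) in X, Y by lra.
split; apply (Rmult_le_reg_l (r * PI)); try nra;
  replace (r * PI * (2 * (K - u q) / r)) with (2 * PI * (K - u q)) by (field; lra); lra.
Qed.

Lemma Cmod_sym (a b : C) : Cmod (a - b) = Cmod (b - a).
Proof.
replace (b - a)%C with (- (a - b))%C. apply eq_sym, Cmod_opp.
destruct a, b. unfold Cminus, Copp, Cplus. simpl. f_equal; ring.
Qed.

Lemma Cmod_tri3 (a b c : C) : Cmod (a - c) <= Cmod (a - b) + Cmod (b - c).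
Proof.
replace (a - c)%C with ((a - b) + (b - c))%C. apply Cmod_triangle.
destruct a, b, c. unfold Cminus, Copp, Cplus. simpl. f_equal; ring.
Qed.

Lemma Cmod_pair (x y : R) : Cmod (x, y) = sqrt (x * x + y * y).
Proof. unfold Cmod. simpl. f_equal. ring. Qed.

Lemma Cmod_diff (a b : C) : Cmod (a - b) = sqrt ((fst a - fst b) * (fst a - fst b) + (snd a - snd b) * (snd a - snd b)).
Proof. destruct a, b. unfold Cminus, Copp, Cplus. simpl. rewrite Cmod_pair. f_equal. Qed.


Lemma sqrt_scal (t s : R) : 0 <= s -> sqrt ((t * t) * s) = Rabs t * sqrt s.
Proof.
intros Hs. rewrite sqrt_mult_alt. f_equal. apply sqrt_Rsqr_abs. apply Rle_0_sqr.
Qed.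

Lemma coord_le (a b : C) : Rabs (fst a - fst b) <= Cmod (a - b) /\ Rabs (snd a - snd b) <= Cmod (a - b).
Proof.
assert (H := Rmax_Cmod (a - b)%C). destruct a, b. simpl in *.
unfold Cminus, Copp, Cplus in *; simpl in *.
split; (eapply Rle_trans; [|apply H]); [apply Rmax_l|apply Rmax_r].
Qed.

Lemma dx_is_derive u : harmonic u -> forall a b, is_derive (fun s => u (s, b)) a (dx u (a, b)).
Proof. intros Hu a b. destruct (harmonic_C1 u Hu) as [[H1 _] _]. apply Derive_correct. apply (H1 (a, b)). Qed.

Lemma dy_is_derive u : harmonic u -> forall a b, is_derive (fun s => u (a, s)) b (dy u (a, b)).
Proof. intros Hu a b. destruct (harmonic_C1 u Hu) as [[_ [H2 _]] _]. apply Derive_correct. apply (H2 (a, b)). Qed.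

Lemma const_of_grad0 u : harmonic u -> (forall z, dx u z = 0) -> (forall z, dy u z = 0) -> forall z w, u z = u w.
Proof.
intros Hu Hx Hy [a b] [c d].
assert (E1 : u (a, b) = u (c, b)).
{ apply (const_of_deriv0 (fun s => u (s, b))). intros r. rewrite <- (Hx (r, b)). apply dx_is_derive; auto. }
assert (E2 : u (c, b) = u (c, d)).
{ apply (const_of_deriv0 (fun s => u (c, s))). intros r. rewrite <- (Hy (c, r)). apply dy_is_derive; auto. }
congruence.
Qed.

Lemma small_zero (a b : R) : (forall r, 0 < r -> Rabs a <= b / r) -> a = 0.
Proof.
intros H. destruct (Req_dec a 0) as [E|E]; auto. exfalso.
assert (Pa : 0 < Rabs a) by (apply Rabs_pos_lt; auto).
assert (Pb : 0 <= Rabs b) by apply Rabs_pos.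
set (r := 2 * (Rabs b + 1) / Rabs a).
assert (Pr : 0 < r) by (unfold r; apply Rdiv_lt_0_compat; lra).
specialize (H r Pr).
assert (Eb : b / r = b * Rabs a / (2 * (Rabs b + 1))) by (unfold r; field; lra).
rewrite Eb in H.
assert (H1 : b * Rabs a <= Rabs b * Rabs a) by (apply Rmult_le_compat_r; [lra|apply Rle_abs]).
assert (H2 : Rabs a * (2 * (Rabs b + 1)) <= b * Rabs a).
{ apply (Rmult_le_reg_r (/ (2 * (Rabs b + 1)))). apply Rinv_0_lt_compat; lra.
  rewrite Rmult_assoc, Rinv_r by lra. rewrite Rmult_1_r. exact H. }
nra.
Qed.

Lemma bounded_above_const u K : harmonic u -> (forall z, u z <= K) -> forall z w, u z = u w.
Proof.
intros Hu HK. apply const_of_grad0; auto.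
- intros z. apply (small_zero _ (2 * (K - u z))). intros r Hr.
  apply (grad_up u z r K Hu Hr). intros t. apply HK.
- intros z. apply (small_zero _ (2 * (K - u z))). intros r Hr.
  apply (grad_up u z r K Hu Hr). intros t. apply HK.
Qed.

Lemma bounded_below_const u k : harmonic u -> (forall z, k <= u z) -> forall z w, u z = u w.
Proof.
intros Hu Hk. apply const_of_grad0; auto.
- intros z. apply (small_zero _ (2 * (u z - k))). intros r Hr.
  apply (grad_low u z r k Hu Hr). intros t. apply Hk.
- intros z. apply (small_zero _ (2 * (u z - k))). intros r Hr.
  apply (grad_low u z r k Hu Hr). intros t. apply Hk.
Qed.

Lemma Cmod_polar (w : C) (r t : R) : 0 <= r -> Cmod ((fst w + r * cos t, snd w + r * sin t) - w) = r.
Proof.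
intros Hr. rewrite Cmod_diff. simpl.
replace ((fst w + r * cos t - fst w) * (fst w + r * cos t - fst w) + (snd w + r * sin t - snd w) * (snd w + r * sin t - snd w))
  with ((r * r) * (sin t * sin t + cos t * cos t)) by ring.
assert (S := sin2_cos2 t). unfold Rsqr in S. rewrite S, Rmult_1_r.
apply sqrt_square; auto.
Qed.

Lemma Cmod_seg (p : C) (s e1 e2 : R) : 0 <= s -> e1 * e1 + e2 * e2 = 1 ->
  Cmod ((fst p + s * e1, snd p + s * e2) - p) = s.
Proof.
intros Hs He. rewrite Cmod_diff. simpl.
replace ((fst p + s * e1 - fst p) * (fst p + s * e1 - fst p) + (snd p + s * e2 - snd p) * (snd p + s * e2 - snd p))
  with ((s * s) * (e1 * e1 + e2 * e2)) by ring.
rewrite He, Rmult_1_r. apply sqrt_square; auto.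
Qed.

Lemma harnack_seg u p e1 e2 d : harmonic u -> 0 < d -> e1 * e1 + e2 * e2 = 1 ->
  (forall w, Cmod (w - p) < d -> 0 < u w) ->
  u p <= exp 8 * u (fst p + d / 2 * e1, snd p + d / 2 * e2).
Proof.
intros Hu Hd He Hpos.
destruct (harmonic_C1 u Hu) as [C0 _].
set (P := fun s => (fst p + s * e1, snd p + s * e2)).
set (k := 16 / d).
set (psi := fun s => u (fst p + s * e1, snd p + s * e2) * exp (k * s)).
set (dpsi := fun s => (dx u (P s) * e1 + dy u (P s) * e2) * exp (k * s) + u (P s) * (k * exp (k * s))).
assert (Dpsi : forall s, is_derive psi s (dpsi s)).
{ intros s. unfold psi, dpsi.
  apply (dR_mult (fun s => u (fst p + s * e1, snd p + s * e2)) (fun s => exp (k * s))).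
  - apply (chain u C0 (fun s => fst p + s * e1) (fun s => snd p + s * e2)).
    + eapply dR_val. apply (dR_plus (fun _ => fst p) (fun s => s * e1)). apply dR_const.
      apply (dR_mult (fun s => s) (fun _ => e1)). apply dR_id. apply dR_const. rring.
    + eapply dR_val. apply (dR_plus (fun _ => snd p) (fun s => s * e2)). apply dR_const.
      apply (dR_mult (fun s => s) (fun _ => e2)). apply dR_id. apply dR_const. rring.
  - auto_derive; auto. rring. }
assert (Be1 : Rabs e1 <= 1) by (apply Rabs_le; nra).
assert (Be2 : Rabs e2 <= 1) by (apply Rabs_le; nra).
assert (Pos : forall s, 0 <= s <= d / 2 -> 0 <= dpsi s).
{ intros s Hs. unfold dpsi.
  assert (Hr : 0 < d / 4) by lra.
  assert (Hc : forall t, 0 <= PF u (P s) (d / 4) t).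
  { intros t. apply Rlt_le. apply Hpos. unfold PF.
    eapply Rle_lt_trans. apply (Cmod_tri3 _ (P s) p).
    rewrite Cmod_polar by lra. unfold P. rewrite Cmod_seg by (auto; lra). lra. }
  destruct (grad_low u (P s) (d / 4) 0 Hu Hr Hc) as [Gx Gy].
  assert (Up : 0 < u (P s)).
  { apply Hpos. unfold P. rewrite Cmod_seg by (auto; lra). lra. }
  assert (E : 0 < exp (k * s)) by apply exp_pos.
  replace (2 * (u (P s) - 0) / (d / 4)) with (k / 2 * u (P s)) in Gx, Gy by (unfold k; field; lra).
  assert (A1 : - (k / 2 * u (P s)) <= dx u (P s) * e1).
  { assert (Rabs (dx u (P s) * e1) <= k / 2 * u (P s)).
    { rewrite Rabs_mult. assert (0 <= Rabs (dx u (P s))) by apply Rabs_pos.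
      assert (0 <= Rabs e1) by apply Rabs_pos. nra. }
    apply Rabs_le_between in H. lra. }
  assert (A2 : - (k / 2 * u (P s)) <= dy u (P s) * e2).
  { assert (Rabs (dy u (P s) * e2) <= k / 2 * u (P s)).
    { rewrite Rabs_mult. assert (0 <= Rabs (dy u (P s))) by apply Rabs_pos.
      assert (0 <= Rabs e2) by apply Rabs_pos. nra. }
    apply Rabs_le_between in H. lra. }
  replace ((dx u (P s) * e1 + dy u (P s) * e2) * exp (k * s) + u (P s) * (k * exp (k * s)))
    with ((dx u (P s) * e1 + dy u (P s) * e2 + k * u (P s)) * exp (k * s)) by ring.
  apply Rmult_le_pos; [lra|lra]. }
destruct (MVT_gen psi 0 (d / 2) dpsi) as [c [Hc Hc2]].
- intros x _. apply Dpsi.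
- intros x _. apply continuity_pt_filterlim. apply (cont_of_derive psi x (dpsi x)). apply Dpsi.
- rewrite Rmin_left, Rmax_right in Hc by lra.
  assert (0 <= dpsi c * (d / 2 - 0)) by (apply Rmult_le_pos; [apply Pos; lra | lra]).
  unfold psi in Hc2. rewrite !Rmult_0_l, Rmult_0_r, !Rplus_0_r, exp_0, Rmult_1_r in Hc2.
  replace (k * (d / 2)) with 8 in Hc2 by (unfold k; field; lra).
  destruct p as [p1 p2]. simpl in *. lra.
Qed.

Lemma ivt_zero u p q : harmonic u -> 0 < u p -> u q <= 0 -> exists z, u z = 0 /\ Cmod (z - p) <= Cmod (q - p).
Proof.
intros Hu Hp Hq.
destruct (harmonic_C1 u Hu) as [C0 _].
set (phi := fun t => u (fst p + t * (fst q - fst p), snd p + t * (snd q - snd p))).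
assert (Dphi : forall t, is_derive phi t (dx u (fst p + t * (fst q - fst p), snd p + t * (snd q - snd p)) * (fst q - fst p)
                                        + dy u (fst p + t * (fst q - fst p), snd p + t * (snd q - snd p)) * (snd q - snd p))).
{ intros t. unfold phi. apply (chain u C0 (fun t => fst p + t * (fst q - fst p)) (fun t => snd p + t * (snd q - snd p))).
  + eapply dR_val. apply (dR_plus (fun _ => fst p) (fun s => s * (fst q - fst p))). apply dR_const.
    apply (dR_mult (fun s => s) (fun _ => fst q - fst p)). apply dR_id. apply dR_const. rring.
  + eapply dR_val. apply (dR_plus (fun _ => snd p) (fun s => s * (snd q - snd p))). apply dR_const.
    apply (dR_mult (fun s => s) (fun _ => snd q - snd p)). apply dR_id. apply dR_const. rring. }
assert (P0 : phi 0 = u p) by (unfold phi; destruct p; simpl; f_equal; f_equal; ring).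
assert (P1 : phi 1 = u q) by (unfold phi; destruct p, q; simpl; f_equal; f_equal; ring).
destruct (IVT_gen phi 0 1 0) as [t [Ht Et]].
- intros x. apply continuity_pt_filterlim. eapply cont_of_derive. apply Dphi.
- rewrite P0, P1. rewrite Rmin_right, Rmax_left by lra. lra.
- rewrite Rmin_left, Rmax_right in Ht by lra.
  exists (fst p + t * (fst q - fst p), snd p + t * (snd q - snd p)). split; [exact Et|].
  rewrite !Cmod_diff. simpl.
  replace ((fst p + t * (fst q - fst p) - fst p) * (fst p + t * (fst q - fst p) - fst p) +
           (snd p + t * (snd q - snd p) - snd p) * (snd p + t * (snd q - snd p) - snd p))
    with ((t * t) * ((fst q - fst p) * (fst q - fst p) + (snd q - snd p) * (snd q - snd p))) by ring.
  rewrite sqrt_scal by (apply Rplus_le_le_0_compat; apply Rle_0_sqr). rewrite Rabs_right by lra.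
  assert (0 <= sqrt ((fst q - fst p) * (fst q - fst p) + (snd q - snd p) * (snd q - snd p))) by apply sqrt_pos.
  nra.
Qed.

Fixpoint lmax (f : C -> R) (l : list (Compactness.Tn 2 R)) : R :=
  match l with
  | nil => 0
  | cons t l' => Rmax (f (fst t, fst (snd t))) (lmax f l')
  end.

Lemma lmax_in f l t : List.In t l -> f (fst t, fst (snd t)) <= lmax f l.
Proof.
induction l as [|t' l IH]; simpl; [tauto|].
intros [<-|H]. apply Rmax_l. eapply Rle_trans; [apply IH; auto|apply Rmax_r].
Qed.

Lemma bounded_square (f : C -> R) : Cont f -> forall a b a' b',
  exists B, forall x y, a <= x <= b -> a' <= y <= b' -> f (x, y) <= B.
Proof.
intros Hf a b a' b'.
assert (Hd : forall x y, exists d : posreal, forall u v, Rabs (u - x) < d -> Rabs (v - y) < d -> Rabs (f (u, v) - f (x, y)) < 1).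
{ intros x y. destruct (Hf x y (mkposreal 1 Rlt_0_1)) as [d Hd]. exists d. exact Hd. }
set (dl := fun t : Compactness.Tn 2 R => proj1_sig (ClassicalEpsilon.constructive_indefinite_description _ (Hd (fst t) (fst (snd t))))).
assert (Hdl : forall t u v, Rabs (u - fst t) < dl t -> Rabs (v - fst (snd t)) < dl t -> Rabs (f (u, v) - f (fst t, fst (snd t))) < 1).
{ intros t. unfold dl. destruct (ClassicalEpsilon.constructive_indefinite_description _ _) as [d Hd']. simpl. exact Hd'. }
assert (K := compactness_list 2 (a, (a', tt)) (b, (b', tt)) dl).
apply Classical_Prop.NNPP. intros nB. apply K. intros [l Hl]. apply nB.
exists (lmax f l + 1). intros x y Hx Hy.
destruct (Hl (x, (y, tt))) as [t [Ht [_ Hc]]].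
{ simpl. tauto. }
destruct t as [t1 [t2 []]]. simpl in Hc. destruct Hc as [H1 [H2 _]].
assert (E := Hdl (t1, (t2, tt)) x y H1 H2). simpl in E.
assert (M := lmax_in f l _ Ht). simpl in M.
apply Rabs_lt_between in E. lra.
Qed.

Lemma bounded_disc (f : C -> R) : Cont f -> forall c R0, exists B, forall p, Cmod (p - c) <= R0 -> f p <= B.
Proof.
intros Hf c R0.
destruct (bounded_square f Hf (fst c - R0) (fst c + R0) (snd c - R0) (snd c + R0)) as [B HB].
exists B. intros [x y] Hp. destruct (coord_le (x, y) c) as [A1 A2]. simpl in A1, A2.
apply Rabs_le_between in A1. apply Rabs_le_between in A2 || (apply Rabs_le_between in A2).
apply HB; lra.
Qed.

Lemma M_ge u z r w : Defs.disc z r w -> Rbar_le (Finite (u w)) (M u z r).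
Proof.
intros Hw. unfold M. destruct (Lub_Rbar_correct (fun a => exists w, Defs.disc z r w /\ a = u w)) as [Hub _].
apply Hub. exists w. auto.
Qed.

Lemma M_le u z r B : (forall w, Defs.disc z r w -> u w <= B) -> Rbar_le (M u z r) (Finite B).
Proof.
intros H. unfold M. destruct (Lub_Rbar_correct (fun a => exists w, Defs.disc z r w /\ a = u w)) as [_ Hlub].
apply Hlub. intros x [w [Hw ->]]. simpl. apply H; auto.
Qed.

Definition gam : nat := 192.
Lemma gam_eq : gam = 192%nat. Proof. reflexivity. Qed.
Global Opaque gam.

Lemma bern (x : R) (n : nat) : 0 <= x -> 1 + INR n * x <= (1 + x) ^ n.
Proof.
intros Hx. induction n as [|n IH].
- simpl. lra.
- rewrite S_INR. simpl.
  assert (0 <= INR n) by apply pos_INR.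
  assert (0 <= INR n * x * x) by (apply Rmult_le_pos; [apply Rmult_le_pos|]; lra).
  nra.
Qed.

Lemma exp_nat (n : nat) : exp (INR n) = exp 1 ^ n.
Proof.
induction n as [|n IH].
- simpl. apply exp_0.
- rewrite S_INR, exp_plus, IH. simpl. ring.
Qed.

Lemma gain0 : 2 * exp 8 < (13 / 12) ^ gam.
Proof.
assert (E8 : exp 8 <= 3 ^ 8).
{ replace 8 with (INR 8) by (simpl; ring). rewrite exp_nat.
  apply pow_incr. split; [apply Rlt_le, exp_pos | apply exp_le_3]. }
assert (B12 : 2 <= (13 / 12) ^ 12).
{ replace (13 / 12) with (1 + 1 / 12) by field. eapply Rle_trans; [|apply bern; lra].
  simpl. lra. }
assert (P : 2 ^ 16 <= (13 / 12) ^ gam).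
{ rewrite gam_eq. change 192%nat with (12 * 16)%nat. rewrite pow_mult. apply pow_incr. lra. }
assert (A1 : (2:R) ^ 16 = 65536) by (simpl; ring).
assert (A2 : (3:R) ^ 8 = 6561) by (simpl; ring).
rewrite A1 in P. rewrite A2 in E8. lra.
Qed.

Lemma pow_pos' (x : R) (n : nat) : 0 < x -> 0 < x ^ n.
Proof. intros; apply pow_lt; auto. Qed.

Definition pw (x : R) : R := x ^ gam.
Lemma pw_pos x : 0 < x -> 0 < pw x.
Proof. intros; unfold pw; apply pow_lt; auto. Qed.
Lemma pw_nn x : 0 <= x -> 0 <= pw x.
Proof. intros; unfold pw; apply pow_le; auto. Qed.
Lemma pw_le x y : 0 <= x <= y -> pw x <= pw y.
Proof. intros; unfold pw; apply pow_incr; auto. Qed.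
Lemma pw_mult x y : pw (x * y) = pw x * pw y.
Proof. unfold pw. apply Rpow_mult_distr. Qed.
Lemma pw_0 : pw 0 = 0.
Proof. unfold pw. rewrite gam_eq. apply pow_i. lia. Qed.
Lemma gain : 2 * exp 8 < pw (13 / 12).
Proof. apply gain0. Qed.
Global Opaque pw.

Definition Cst : R := 2 * pw 2.

Lemma Cst_pos : 0 < Cst.
Proof. unfold Cst. assert (H := pw_pos 2 ltac:(lra)). lra. Qed.

Lemma step u : harmonic u -> (exists z w : C, u z <> u w) -> forall A, 0 <= A ->
  exists z rho, 0 < rho /\ u z = 0 /\
    Rbar_le (M u z rho) (Rbar_mult (Finite Cst) (M u z (rho / 2))) /\
    Rbar_lt (Finite A) (M u z rho).
Proof.
intros Hu [z0 [w0 Hne]] A HA.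
assert (Cu : Cont u) by (apply C1_Cont; exact (proj1 (harmonic_C1 u Hu))).
assert (P2 : 0 < pw 2) by (apply pw_pos; lra).
assert (CstP := Cst_pos).
assert (Hc : exists c, u c <= 0).
{ apply Classical_Prop.NNPP. intros H. apply Hne. apply (bounded_below_const u 0 Hu).
  intros z. apply Rnot_lt_le. intros Hz. apply H. exists z. lra. }
destruct Hc as [c Hc].
assert (Hq : exists q0, Cst * A < u q0).
{ apply Classical_Prop.NNPP. intros H. apply Hne. apply (bounded_above_const u (Cst * A) Hu).
  intros z. apply Rnot_lt_le. intros Hz. apply H. exists z. auto. }
destruct Hq as [q0 Hq0].
assert (KqP : 0 <= Cst * A) by (apply Rmult_le_pos; lra).
set (R0 := 2 * Cmod (q0 - c) + 1).
assert (CP : 0 <= Cmod (q0 - c)) by apply Cmod_ge_0.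
assert (R0P : 1 <= R0) by (unfold R0; lra).
set (G := fun p => Rmax (u p) 0 * pw (R0 - Cmod (p - c))).
set (E := fun y => exists p, Cmod (p - c) <= R0 /\ y = G p).
destruct (bounded_disc u Cu c R0) as [B HB].
assert (Gbd : forall p, Cmod (p - c) <= R0 -> G p <= Rmax B 0 * pw R0).
{ intros p Hp. unfold G. assert (0 <= Cmod (p - c)) by apply Cmod_ge_0.
  apply Rmult_le_compat. apply Rmax_r. apply pw_nn; lra.
  specialize (HB p Hp). unfold Rmax. destruct (Rle_dec (u p) 0); destruct (Rle_dec B 0); lra.
  apply pw_le; lra. }
assert (Gq0 : G q0 = u q0 * pw ((R0 + 1) / 2)).
{ unfold G. rewrite Rmax_left by lra. f_equal. f_equal. unfold R0. field. }
assert (Gq0P : 0 < G q0) by (rewrite Gq0; apply Rmult_lt_0_compat; [lra|apply pw_pos; lra]).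
destruct (completeness E) as [S [HS1 HS2]].
{ exists (Rmax B 0 * pw R0). intros y [p [Hp ->]]. apply Gbd; auto. }
{ exists (G q0). exists q0. split; auto. unfold R0. lra. }
assert (SGq : G q0 <= S) by (apply HS1; exists q0; split; auto; unfold R0; lra).
assert (Smax : forall q, Cmod (q - c) <= R0 -> G q <= S) by (intros q Hq; apply HS1; exists q; auto).
assert (Hp : exists p, Cmod (p - c) <= R0 /\ S / 2 < G p).
{ apply Classical_Prop.NNPP. intros H.
  assert (S <= S / 2). { apply HS2. intros y [p [Hp ->]]. apply Rnot_lt_le. intros Hl. apply H. exists p. auto. }
  lra. }
destruct Hp as [p [Hpc HpG]].
set (d := R0 - Cmod (p - c)).
assert (dnn : 0 <= d) by (unfold d; lra).
assert (upP : 0 < u p).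
{ apply Rnot_le_lt. intros Hle. unfold G in HpG. rewrite Rmax_right in HpG by lra. lra. }
assert (dP : 0 < d).
{ destruct dnn as [|E0]; auto. unfold G in HpG. fold d in HpG. rewrite <- E0, pw_0 in HpG. lra. }
assert (Gp : G p = u p * pw d) by (unfold G; rewrite Rmax_left by lra; reflexivity).
assert (Cpc : 0 <= Cmod (p - c)) by apply Cmod_ge_0.
assert (PR : 0 < pw R0) by (apply pw_pos; lra).
assert (Pd : 0 < pw d) by (apply pw_pos; lra).
assert (S2 : S < 2 * (u p * pw d)) by (rewrite <- Gp; lra).
assert (Hup : A < u p).
{ assert (E1 : pw R0 = pw (R0 / 2) * pw 2) by (rewrite <- pw_mult; f_equal; field).
  assert (L1 : pw (R0 / 2) <= pw ((R0 + 1) / 2)) by (apply pw_le; lra).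
  assert (L2 : pw d <= pw R0) by (apply pw_le; unfold d; lra).
  assert (X1 : u q0 * pw (R0 / 2) <= S).
  { eapply Rle_trans; [|exact SGq]. rewrite Gq0. apply Rmult_le_compat_l; lra. }
  assert (X2 : u q0 * pw R0 < Cst * u p * pw R0).
  { rewrite E1. unfold Cst.
    assert (Y1 : u q0 * pw (R0 / 2) * pw 2 <= S * pw 2) by (apply Rmult_le_compat_r; lra).
    assert (Y2 : S * pw 2 < 2 * (u p * pw d) * pw 2) by (apply Rmult_lt_compat_r; lra).
    assert (Y3 : 2 * (u p * pw d) * pw 2 <= 2 * (u p * pw R0) * pw 2).
    { apply Rmult_le_compat_r; [lra|]. apply Rmult_le_compat_l; [lra|]. apply Rmult_le_compat_l; lra. }
    rewrite E1 in Y3. 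
    replace (u q0 * (pw (R0 / 2) * pw 2)) with (u q0 * pw (R0 / 2) * pw 2) by ring.
    replace (2 * pw 2 * u p * (pw (R0 / 2) * pw 2)) with (2 * (u p * (pw (R0 / 2) * pw 2)) * pw 2) by ring.
    lra. }
  assert (X3 : u q0 < Cst * u p) by (apply (Rmult_lt_reg_r (pw R0)); lra).
  assert (X4 : Cst * A < Cst * u p) by lra.
  apply (Rmult_lt_reg_l Cst); lra. }
assert (Hw : exists w, Cmod (w - p) < d / 6 /\ u w <= 0).
{ apply Classical_Prop.NNPP. intros H.
  assert (Hpos : forall w, Cmod (w - p) < d / 6 -> 0 < u w).
  { intros w Hw. apply Rnot_le_lt. intros Hle. apply H. exists w. auto. }
  set (L := Cmod (c - p)).
  assert (HL : d / 6 <= L) by (apply Rnot_lt_le; intros Hl; specialize (Hpos c Hl); lra).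
  assert (LP : 0 < L) by lra.
  assert (LE : Cmod (p - c) = L) by (unfold L; apply Cmod_sym).
  set (a1 := fst c - fst p). set (a2 := snd c - snd p).
  assert (Lsq : L * L = a1 * a1 + a2 * a2).
  { unfold L. rewrite Cmod_diff. apply sqrt_sqrt. apply Rplus_le_le_0_compat; apply Rle_0_sqr. }
  set (e1 := a1 / L). set (e2 := a2 / L).
  assert (He : e1 * e1 + e2 * e2 = 1).
  { unfold e1, e2. replace (a1 / L * (a1 / L) + a2 / L * (a2 / L)) with ((a1 * a1 + a2 * a2) / (L * L)) by (field; lra).
    rewrite <- Lsq. field. lra. }
  set (dl := d / 6).
  assert (dlP : 0 < dl) by (unfold dl; lra).
  assert (Hh := harnack_seg u p e1 e2 dl Hu dlP He Hpos).
  set (p' := (fst p + dl / 2 * e1, snd p + dl / 2 * e2)) in Hh.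
  assert (Cp' : Cmod (p' - c) = L - dl / 2).
  { rewrite Cmod_diff. unfold p'. simpl.
    replace ((fst p + dl / 2 * e1 - fst c) * (fst p + dl / 2 * e1 - fst c) + (snd p + dl / 2 * e2 - snd c) * (snd p + dl / 2 * e2 - snd c))
      with (((1 - dl / (2 * L)) * (1 - dl / (2 * L))) * (a1 * a1 + a2 * a2)) by (unfold e1, e2, a1, a2; field; lra).
    rewrite <- Lsq.
    replace ((1 - dl / (2 * L)) * (1 - dl / (2 * L)) * (L * L)) with ((L - dl / 2) * (L - dl / 2)) by (field; lra).
    apply sqrt_square. unfold dl in *. lra. }
  assert (Hp'd : Cmod (p' - c) <= R0) by (rewrite Cp'; unfold d in *; rewrite LE in *; unfold dl in *; lra).
  assert (Gp'S : G p' <= S) by (apply Smax; auto).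
  assert (E8 : 0 < exp 8) by apply exp_pos.
  assert (up' : 0 < u p').
  { apply Rnot_le_lt. intros Hle. assert (exp 8 * u p' <= 0). { apply Rmult_le_0_l; lra. } lra. }
  assert (Gp' : G p' = u p' * (pw (13 / 12) * pw d)).
  { unfold G. rewrite Rmax_left by lra. rewrite <- pw_mult. f_equal. f_equal. rewrite Cp'.
    unfold dl. assert (dE : d = R0 - L) by (unfold d; rewrite LE; reflexivity). rewrite dE. field. }
  assert (g := gain).
  assert (Z1 : u p * (pw (13 / 12) * pw d) <= exp 8 * G p').
  { rewrite Gp'. replace (exp 8 * (u p' * (pw (13 / 12) * pw d))) with ((exp 8 * u p') * (pw (13 / 12) * pw d)) by ring.
    apply Rmult_le_compat_r; [|exact Hh]. apply Rmult_le_pos; apply Rlt_le; [apply pw_pos; lra|exact Pd]. }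
  assert (Z2 : exp 8 * G p' < exp 8 * (2 * (u p * pw d))) by (apply Rmult_lt_compat_l; lra).
  assert (Z3 : (u p * pw d) * pw (13 / 12) < (u p * pw d) * (2 * exp 8)).
  { replace ((u p * pw d) * pw (13 / 12)) with (u p * (pw (13 / 12) * pw d)) by ring. lra. }
  apply Rmult_lt_reg_l in Z3; [lra|]. apply Rmult_lt_0_compat; lra. }
destruct Hw as [w [Hwp Hwu]].
destruct (ivt_zero u p w Hu upP Hwu) as [z [Hz Hzp]].
set (rho := d / 3).
assert (Hub : forall q, Defs.disc z rho q -> u q <= Cst * u p).
{ intros q Hq. unfold Defs.disc in Hq.
  assert (Cqp : Cmod (q - p) < d / 2).
  { eapply Rle_lt_trans. apply (Cmod_tri3 q z p). unfold rho in Hq. lra. }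
  destruct (Rle_dec (u q) 0) as [Hle|Hgt].
  { assert (0 < Cst * u p) by (apply Rmult_lt_0_compat; lra). lra. }
  apply Rnot_le_lt in Hgt.
  assert (Cqc : Cmod (q - c) <= Cmod (q - p) + Cmod (p - c)) by apply Cmod_tri3.
  set (dq := R0 - Cmod (q - c)).
  assert (dqP : d / 2 < dq) by (unfold dq, d in *; lra).
  assert (Gq : G q = u q * pw dq) by (unfold G; rewrite Rmax_left by lra; reflexivity).
  assert (GqS : G q <= S) by (apply Smax; unfold dq, d in *; lra).
  assert (Pdq : 0 < pw dq) by (apply pw_pos; lra).
  assert (L1 : pw d <= pw 2 * pw dq) by (rewrite <- pw_mult; apply pw_le; lra).
  assert (W : u q * pw dq < (Cst * u p) * pw dq).
  { unfold Cst. assert (2 * (u p * pw d) <= 2 * (u p * (pw 2 * pw dq))).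
    { apply Rmult_le_compat_l; [lra|]. apply Rmult_le_compat_l; lra. }
    replace (2 * pw 2 * u p * pw dq) with (2 * (u p * (pw 2 * pw dq))) by ring. lra. }
  apply Rlt_le. apply (Rmult_lt_reg_r (pw dq)); auto. }
assert (Hpz : Defs.disc z (rho / 2) p).
{ unfold Defs.disc. rewrite Cmod_sym. unfold rho. lra. }
assert (Hpz' : Defs.disc z rho p).
{ unfold Defs.disc in *. unfold rho in *. lra. }
exists z, rho. split; [unfold rho; lra|]. split; [exact Hz|]. split.
- assert (M1 := M_le u z rho _ Hub).
  assert (M2 := M_ge u z (rho / 2) p Hpz).
  destruct (M u z (rho / 2)) as [m| |] eqn:Em.
  + simpl in M2. eapply Rbar_le_trans. exact M1. simpl.
    apply Rmult_le_compat_l; lra.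
  + unfold Rbar_mult, Rbar_mult'. destruct (Rle_dec 0 Cst) as [H0|H0]; [|lra].
    destruct (Rle_lt_or_eq_dec 0 Cst H0) as [H1|H1]; [|lra].
    destruct (M u z rho); simpl; auto.
  + simpl in M2. contradiction.
- eapply Rbar_lt_le_trans; [|apply (M_ge u z rho p Hpz')]. simpl. exact Hup.
Qed.

Theorem corollary4 :
  exists Cst : R, 0 < Cst /\
  forall u : C -> R, harmonic u -> (exists z w : C, u z <> u w) ->
  exists (zs : nat -> C) (rho : nat -> R),
    (forall n, 0 < rho n /\ u (zs n) = 0 /\
       Rbar_le (M u (zs n) (rho n)) (Rbar_mult (Finite Cst) (M u (zs n) (rho n / 2)))) /\
    (forall A : R, exists N : nat, forall n, (N <= n)%nat ->
       Rbar_lt (Finite A) (M u (zs n) (rho n))).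
Proof.
exists Cst. split; [apply Cst_pos|].
intros u Hu Hnc.
assert (H : forall n : nat, exists zr : C * R, 0 < snd zr /\ u (fst zr) = 0 /\
    Rbar_le (M u (fst zr) (snd zr)) (Rbar_mult (Finite Cst) (M u (fst zr) (snd zr / 2))) /\
    Rbar_lt (Finite (INR n)) (M u (fst zr) (snd zr))).
{ intros n. destruct (step u Hu Hnc (INR n) (pos_INR n)) as [z [r Hzr]]. exists (z, r). exact Hzr. }
set (f := fun n => proj1_sig (constructive_indefinite_description _ (H n))).
assert (Hf : forall n, 0 < snd (f n) /\ u (fst (f n)) = 0 /\
    Rbar_le (M u (fst (f n)) (snd (f n))) (Rbar_mult (Finite Cst) (M u (fst (f n)) (snd (f n) / 2))) /\
    Rbar_lt (Finite (INR n)) (M u (fst (f n)) (snd (f n)))).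
{ intros n. unfold f. destruct (constructive_indefinite_description _ _) as [x Hx]. exact Hx. }
exists (fun n => fst (f n)), (fun n => snd (f n)). split.
- intros n. destruct (Hf n) as [A1 [A2 [A3 _]]]. auto.
- intros A. destruct (archimed (Rabs A)) as [Hup _].
  assert (Z0 : (0 <= up (Rabs A))%Z).
  { apply le_IZR. assert (0 <= Rabs A) by apply Rabs_pos. lra. }
  exists (Z.to_nat (up (Rabs A))). intros n Hn.
  destruct (Hf n) as [_ [_ [_ A4]]].
  eapply Rbar_le_lt_trans; [|exact A4]. simpl.
  apply le_INR in Hn. rewrite INR_IZR_INZ, Z2Nat.id in Hn by auto.
  assert (A <= Rabs A) by apply Rle_abs. lra.
Qed.
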